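(* Let $\mathcal{X}$ be a complex Euclidean space of dimension $d$, and let $\rho,\sigma$ be positive definite operators on $\mathcal{X}$ with eigenvalues $\lambda_1^\downarrow(\rho)\ge\cdots\ge\lambda_d^\downarrow(\rho)$ and $\lambda_1^\downarrow(\sigma)\ge\cdots\ge\lambda_d^\downarrow(\sigma)$, and let $\lambda_j^\uparrow(\sigma)=\lambda_{d+1-j}^\downarrow(\sigma)$. Then $$\max_{\Phi}S(\Phi(\rho)\,\|\,\sigma)=\operatorname{Tr}(\rho\log\rho)-\sum_{j=1}^d\lambda_j^\downarrow(\rho)\log\lambda_j^\uparrow(\sigma),$$ where the maximum is over all bi-stochastic maps $\Phi$ on the operators on $\mathcal{X}$; in particular this maximum coincides with $\max_{U\in U(\mathcal{X})}S(U\rho U^*\|\sigma)$.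
   Context: A bi-stochastic map (bi-stochastic quantum channel) on $\mathcal{X}$ is a completely positive, trace-preserving, unital linear map $\Phi$ from the operators on $\mathcal{X}$ to themselves ($\Phi(\mathbb{1})=\mathbb{1}$). $U(\mathcal{X})$ denotes the group of unitary operators on $\mathcal{X}$. Logarithms are base 2 and are applied to positive definite operators via their spectral decomposition. For positive definite $P,Q$ on $\mathcal{X}$, the relative entropy is $S(P\|Q)=\operatorname{Tr}(P\log P)-\operatorname{Tr}(P\log Q)$. *)

(* Defs.v *)
(* Complex numbers are pairs of reals,
   d x d complex matrices are functions nat -> nat -> C whose entries with
   indices < d are the meaningful ones (equality of operators is [meq d]). *)
From Stdlib Require Import Reals Lra Lia Arith ClassicalEpsilon.
Open Scope R_scope.

Definition C := (R * R)%type.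
Definition C0 : C := (0, 0).
Definition C1 : C := (1, 0).
Definition RtoC (x : R) : C := (x, 0).
Definition Cre (z : C) : R := fst z.
Definition Cadd (z w : C) : C := (fst z + fst w, snd z + snd w).
Definition Cmul (z w : C) : C :=
  (fst z * fst w - snd z * snd w, fst z * snd w + snd z * fst w).
Definition Cconj (z : C) : C := (fst z, - snd z).

Fixpoint csum (n : nat) (f : nat -> C) : C :=
  match n with O => C0 | S m => Cadd (csum m f) (f m) end.
Fixpoint rsum (n : nat) (f : nat -> R) : R :=
  match n with O => 0 | S m => rsum m f + f m end.

Definition Mat := nat -> nat -> C.
Definition meq (d : nat) (A B : Mat) : Prop :=
  forall i j, (i < d)%nat -> (j < d)%nat -> A i j = B i j.
Definition mmul (d : nat) (A B : Mat) : Mat :=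
  fun i j => csum d (fun k => Cmul (A i k) (B k j)).
Definition madd (A B : Mat) : Mat := fun i j => Cadd (A i j) (B i j).
Definition mscale (c : C) (A : Mat) : Mat := fun i j => Cmul c (A i j).
Definition adj (A : Mat) : Mat := fun i j => Cconj (A j i).
Definition idm : Mat := fun i j => if Nat.eqb i j then C1 else C0.
Definition diagm (l : nat -> R) : Mat :=
  fun i j => if Nat.eqb i j then RtoC (l i) else C0.
Definition mtr (d : nat) (A : Mat) : C := csum d (fun i => A i i).

Definition unitary (d : nat) (U : Mat) : Prop :=
  meq d (mmul d (adj U) U) idm /\ meq d (mmul d U (adj U)) idm.
Definition hermitian (d : nat) (A : Mat) : Prop := meq d (adj A) A.
Definition qform (d : nat) (A : Mat) (v : nat -> C) : C :=
  csum d (fun i => Cmul (Cconj (v i)) (csum d (fun j => Cmul (A i j) (v j)))).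
Definition psd (d : nat) (A : Mat) : Prop :=
  hermitian d A /\ forall v : nat -> C, 0 <= Cre (qform d A v).
Definition posdef (d : nat) (A : Mat) : Prop :=
  hermitian d A /\
  forall v : nat -> C, (exists i, (i < d)%nat /\ v i <> C0) -> 0 < Cre (qform d A v).

Definition conjm (d : nat) (U A : Mat) : Mat := mmul d (mmul d U A) (adj U).

Definition log2 (x : R) : R := ln x / ln 2.
Definition is_log (d : nat) (P L : Mat) : Prop :=
  exists (U : Mat) (lam : nat -> R),
    unitary d U /\ (forall i, (i < d)%nat -> 0 < lam i) /\
    meq d P (conjm d U (diagm lam)) /\
    meq d L (conjm d U (diagm (fun i => log2 (lam i)))).
Definition mlog (d : nat) (P : Mat) : Mat :=
  epsilon (inhabits idm) (is_log d P).

(* relative entropy S(P||Q) = Tr(P log P) - Tr(P log Q) (real for P,Q > 0) *)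
Definition relent (d : nat) (P Q : Mat) : R :=
  Cre (mtr d (mmul d P (mlog d P))) - Cre (mtr d (mmul d P (mlog d Q))).

(* a map on operators: only depends on the entries of its argument *)
Definition well_defined_map (d : nat) (Phi : Mat -> Mat) : Prop :=
  forall A B, meq d A B -> meq d (Phi A) (Phi B).
Definition linear_map (d : nat) (Phi : Mat -> Mat) : Prop :=
  (forall A B, meq d (Phi (madd A B)) (madd (Phi A) (Phi B))) /\
  (forall (c : C) A, meq d (Phi (mscale c A)) (mscale c (Phi A))).
(* (id_k ⊗ Phi) acting on (k d) x (k d) block matrices; index p = a*d + i *)
Definition ampl (d : nat) (Phi : Mat -> Mat) (M : Mat) : Mat :=
  fun p q =>
    Phi (fun i j => M (Nat.div p d * d + i)%nat (Nat.div q d * d + j)%nat)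
        (Nat.modulo p d) (Nat.modulo q d).
Definition completely_positive (d : nat) (Phi : Mat -> Mat) : Prop :=
  forall (k : nat) (M : Mat), psd (k * d) M -> psd (k * d) (ampl d Phi M).
Definition trace_preserving (d : nat) (Phi : Mat -> Mat) : Prop :=
  forall A, mtr d (Phi A) = mtr d A.
Definition unital (d : nat) (Phi : Mat -> Mat) : Prop := meq d (Phi idm) idm.
Definition bistochastic (d : nat) (Phi : Mat -> Mat) : Prop :=
  well_defined_map d Phi /\ linear_map d Phi /\ completely_positive d Phi /\
  trace_preserving d Phi /\ unital d Phi.

Definition eigs_decreasing (d : nat) (A : Mat) (lam : nat -> R) : Prop :=
  (exists U, unitary d U /\ meq d A (conjm d U (diagm lam))) /\
  (forall i j, (i <= j)%nat -> (j < d)%nat -> lam j <= lam i).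

(* Main.v *)
Require Import Defs.
From Stdlib Require Import Reals Lra Lia ClassicalEpsilon Arith.
From mathcomp Require Import all_boot all_order all_algebra.
From mathcomp Require Import Rstruct.
From mathcomp.real_closed Require Import complex.
From mathcomp Require Import ring lra zify.
Require Import Defs.
Import Order.TTheory GRing.Theory Num.Theory Num.Def.
Set Implicit Arguments. Unset Strict Implicit. Unset Printing Implicit Defensive.
Local Open Scope ring_scope.

Notation K := (complex R).
Local Notation "x %:C" := (@Complex R x 0) (format "x %:C") : ring_scope.
Definition c2z (z : Defs.C) : K := Complex z.1 z.2.
Definition z2c (z : K) : Defs.C := (complex.Re z, complex.Im z).

Lemma c2zK z : z2c (c2z z) = z. Proof. by case: z. Qed.
Lemma z2cK z : c2z (z2c z) = z. Proof. by case: z. Qed.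
Lemma c2z_inj : injective c2z. Proof. exact: can_inj c2zK. Qed.
Lemma c2z_add z w : c2z (Cadd z w) = c2z z + c2z w.
Proof. by case: z; case: w. Qed.
Lemma c2z_mul z w : c2z (Cmul z w) = c2z z * c2z w.
Proof. by case: z; case: w. Qed.
Lemma c2z_conj z : c2z (Cconj z) = (c2z z)^*.
Proof. by case: z. Qed.
Lemma c2z0 : c2z C0 = 0. Proof. by []. Qed.
Lemma c2z1 : c2z C1 = 1. Proof. by []. Qed.
Lemma c2zR r : c2z (RtoC r) = r%:C. Proof. by []. Qed.
Lemma Cre_c2z z : Cre z = complex.Re (c2z z). Proof. by []. Qed.

Lemma ReD (x y : K) : complex.Re (x + y) = complex.Re x + complex.Re y.
Proof. by case: x; case: y. Qed.
Lemma ReM_r (x : K) (r : R) : complex.Re (x * r%:C) = complex.Re x * r.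
Proof. case: x => a b /=. rewrite mulr0 subr0. by []. Qed.
Lemma Re_sum n (F : 'I_n -> K) : complex.Re (\sum_(i < n) F i) = \sum_(i < n) complex.Re (F i).
Proof.
elim: n F => [|n IH] F; first by rewrite !big_ord0.
by rewrite !big_ord_recr /= ReD IH.
Qed.
Lemma ReC (r : R) : complex.Re (r%:C) = r. Proof. by []. Qed.

Lemma csumE n f : c2z (csum n f) = \sum_(i < n) c2z (f i).
Proof.
elim: n => [|n IH]; first by rewrite big_ord0.
by rewrite big_ord_recr /= c2z_add IH.
Qed.
Lemma rsumE n f : rsum n f = \sum_(i < n) f i.
Proof.
elim: n => [|n IH]; first by rewrite big_ord0.
by rewrite big_ord_recr /= IH.
Qed.

Definition hadj m n (M : 'M[K]_(m, n)) : 'M[K]_(n, m) := map_mx conjC M^T.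
Definition tomx d (A : Mat) : 'M[K]_d := \matrix_(i < d, j < d) c2z (A i j).
Definition vcol d (v : nat -> Defs.C) : 'cV[K]_d := \col_(i < d) c2z (v i).

Lemma hadjK m n (M : 'M[K]_(m, n)) : hadj (hadj M) = M.
Proof. by apply/matrixP=> i j; rewrite !mxE conjCK. Qed.
Lemma hadjM m n p (A : 'M[K]_(m, n)) (B : 'M[K]_(n, p)) :
  hadj (A *m B) = hadj B *m hadj A.
Proof. by rewrite /hadj trmx_mul map_mxM. Qed.
Lemma hadjD m n (A B : 'M[K]_(m, n)) : hadj (A + B) = hadj A + hadj B.
Proof. by rewrite /hadj linearD /= map_mxD. Qed.
Lemma hadj1 n : hadj (1%:M : 'M[K]_n) = 1%:M.
Proof. by rewrite /hadj trmx1 map_mx1. Qed.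

Lemma tomx_mmul d A B : tomx d (mmul d A B) = tomx d A *m tomx d B.
Proof.
apply/matrixP=> i j; rewrite !mxE /mmul csumE; apply: eq_bigr => k _.
by rewrite c2z_mul !mxE.
Qed.
Lemma tomx_adj d A : tomx d (adj A) = hadj (tomx d A).
Proof. by apply/matrixP=> i j; rewrite !mxE /adj c2z_conj. Qed.
Lemma tomx_madd d A B : tomx d (madd A B) = tomx d A + tomx d B.
Proof. by apply/matrixP=> i j; rewrite !mxE /madd c2z_add. Qed.
Lemma tomx_mscale d c A : tomx d (mscale c A) = c2z c *: tomx d A.
Proof. by apply/matrixP=> i j; rewrite !mxE /mscale c2z_mul. Qed.
Lemma tomx_idm d : tomx d idm = 1%:M.
Proof.
apply/matrixP=> i j; rewrite !mxE /idm.
case: (eqVneq i j) => [->|nij]; first by rewrite Nat.eqb_refl.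
have -> : Nat.eqb i j = false.
  by apply/Nat.eqb_neq => h; apply: (negP nij); apply/eqP; exact: val_inj h.
by [].
Qed.
Definition dg d (x : nat -> R) : 'M[K]_d := diag_mx (\row_(i < d) (x i)%:C).
Lemma tomx_diagm d l : tomx d (diagm l) = dg d l.
Proof.
apply/matrixP=> i j; rewrite !mxE /diagm.
case: (eqVneq i j) => [->|nij]; first by rewrite Nat.eqb_refl mulr1n.
have -> : Nat.eqb i j = false.
  by apply/Nat.eqb_neq => h; apply: (negP nij); apply/eqP; exact: val_inj h.
by rewrite mulr0n.
Qed.
Lemma tomx_conjm d U A :
  tomx d (conjm d U A) = tomx d U *m tomx d A *m hadj (tomx d U).
Proof. by rewrite /conjm !tomx_mmul tomx_adj. Qed.
Lemma mtrE d A : c2z (mtr d A) = \tr (tomx d A).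
Proof. by rewrite /mtr csumE /mxtrace; apply: eq_bigr => i _; rewrite mxE. Qed.

Lemma meq_tomx d A B : meq d A B <-> tomx d A = tomx d B.
Proof.
split=> [h|h i j hi hj].
  apply/matrixP=> i j; rewrite !mxE; congr c2z; apply: h; apply/ssrnat.ltP; exact: ltn_ord.
have /matrixP/(_ (Ordinal (introT ssrnat.ltP hi)) (Ordinal (introT ssrnat.ltP hj))) := h.
by rewrite !mxE => /c2z_inj.
Qed.

Definition unitm d (W : 'M[K]_d) := hadj W *m W = 1%:M /\ W *m hadj W = 1%:M.
Lemma unitary_tomx d U : unitary d U <-> unitm (tomx d U).
Proof.
rewrite /unitary /unitm !meq_tomx !tomx_mmul tomx_adj tomx_idm; by [].
Qed.

Lemma hermitian_tomx d A : Defs.hermitian d A <-> hadj (tomx d A) = tomx d A.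
Proof. by rewrite /Defs.hermitian meq_tomx tomx_adj. Qed.

Definition bf d (B : Mat) (v w : nat -> Defs.C) : Defs.C :=
  csum d (fun i => Cmul (Cconj (v i)) (csum d (fun j => Cmul (B i j) (w j)))).
Lemma bfE d B v w : c2z (bf d B v w) = (hadj (vcol d v) *m tomx d B *m vcol d w) 0 0.
Proof.
rewrite /bf csumE -mulmxA !mxE; apply: eq_bigr => i _.
rewrite c2z_mul c2z_conj csumE !mxE; congr (_ * _); apply: eq_bigr => j _.
by rewrite !mxE c2z_mul.
Qed.
Lemma qformE d A v : c2z (qform d A v) = (hadj (vcol d v) *m tomx d A *m vcol d v) 0 0.
Proof. exact: bfE. Qed.

Unset Implicit Arguments.
Local Open Scope ring_scope.
Local Notation "x %:C" := (@Complex R x 0) (format "x %:C") : ring_scope.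

Definition frommx d (M : 'M[K]_d) : Mat := fun i j =>
  match (insub i : option 'I_d), (insub j : option 'I_d) with
  | Some i', Some j' => z2c (M i' j') | _, _ => C0 end.
Lemma frommxK d M : tomx d (frommx d M) = M.
Proof. by apply/matrixP=> i j; rewrite !mxE /frommx !valK z2cK. Qed.
Lemma tomxK d A : meq d (frommx d (tomx d A)) A.
Proof. by apply/meq_tomx; rewrite frommxK. Qed.

Definition fromv d (w : 'cV[K]_d) : nat -> Defs.C := fun i =>
  match (insub i : option 'I_d) with Some i' => z2c (w i' 0) | None => C0 end.
Lemma fromvK d w : vcol d (fromv d w) = w.
Proof. by apply/matrixP=> i j; rewrite !mxE /fromv valK z2cK ord1. Qed.

Definition psdm {d} (M : 'M[K]_d) := hadj M = M /\
  forall w : 'cV[K]_d, 0 <= complex.Re ((hadj w *m M *m w) 0 0).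

Lemma psd_tomx d A : psd d A <-> psdm (tomx d A).
Proof.
rewrite /psd /psdm hermitian_tomx; split=> [[h1 h2]|[h1 h2]]; split=> // w.
  by move/RleP: (h2 (fromv d w)); rewrite Cre_c2z qformE fromvK.
by apply/RleP; rewrite Cre_c2z qformE.
Qed.

Lemma posdef_pos d A (w : 'cV[K]_d) : posdef d A -> w != 0 ->
  0 < complex.Re ((hadj w *m tomx d A *m w) 0 0).
Proof.
move=> [_ h] wn0.
have [i Hi] : exists i, w i 0 != 0.
  apply/existsP; apply: contraNT wn0 => /existsPn H.
  by apply/eqP/matrixP=> i j; rewrite ord1 mxE; move: (H i); rewrite negbK => /eqP.
apply/RltP; have := h (fromv d w); rewrite Cre_c2z qformE fromvK; apply.
exists i; split; first by apply/ssrnat.ltP.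
rewrite /fromv valK => /(congr1 c2z); rewrite z2cK c2z0 => E.
by move: Hi; rewrite E eqxx.
Qed.

Lemma posdef_psd d A : posdef d A -> psdm (tomx d A).
Proof.
move=> hA; split; first by apply/hermitian_tomx; case: hA.
move=> w; case: (eqVneq w 0) => [->|wn0].
  by rewrite mulmx0 mxE.
by apply/ltW/posdef_pos.
Qed.

Definition extv {d} (r : 'rV[K]_d) : nat -> R := fun k =>
  match (insub k : option 'I_d) with Some i => complex.Re (r 0 i) | None => 0 end.

Lemma herm_spec d (M : 'M[K]_d) : hadj M = M ->
  exists W x, unitm W /\ M = W *m dg d x *m hadj W.
Proof.
move=> hM.
have Mh : M \is hermsymmx.
  by apply/is_hermitianmxP; rewrite expr0 scale1r; exact: (esym hM).
have Mn := hermitian_normalmx Mh.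
have Preal := hermitian_spectral_diag_real Mh.
have /orthomx_spectralP EM := Mn.
set P := spectralmx M in EM Preal *.
set sp := spectral_diag M in EM Preal *.
have Pu : P \is unitarymx by apply: spectral_unitarymx.
have Pinv : invmx P = hadj P by rewrite invmx_unitary.
exists (hadj P), (extv sp); split.
  split; rewrite hadjK.
    by apply/eqP; move/unitarymxP: Pu => ->.
  by rewrite -Pinv mulVmx // unitarymx_unit.
rewrite hadjK {1}EM Pinv; congr (_ *m _ *m _).
apply/matrixP=> i j; rewrite !mxE /extv valK.
have /mxOverP/(_ 0 i) := Preal => /RRe_real.
by move=> E; congr (_ *+ _); exact: (esym E).
Qed.

Lemma comm_diag d (T : 'M[K]_d) (x y : nat -> R) (f : R -> R) :
  T *m dg d x = dg d y *m T ->
  T *m dg d (fun i => f (x i)) = dg d (fun i => f (y i)) *m T.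
Proof.
move=> ET; apply/matrixP=> i j; rewrite /dg mul_mx_diag mul_diag_mx !mxE.
have /matrixP/(_ i j) := ET; rewrite /dg mul_mx_diag mul_diag_mx !mxE.
case: (eqVneq (T i j) 0) => [-> _|Tn0 Eij]; first by rewrite mul0r mulr0.
have : (x j)%:C = (y i)%:C.
  by apply: (mulfI Tn0); rewrite Eij mulrC.
by case=> ->; rewrite mulrC.
Qed.

Lemma spec_uniq d (W V : 'M[K]_d) (x y : nat -> R) (f : R -> R) :
  unitm W -> unitm V ->
  W *m dg d x *m hadj W = V *m dg d y *m hadj V ->
  W *m dg d (fun i => f (x i)) *m hadj W = V *m dg d (fun i => f (y i)) *m hadj V.
Proof.
move=> [W1 W2] [V1 V2] E.
have ET : (hadj V *m W) *m dg d x = dg d y *m (hadj V *m W).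
  move: (congr1 (fun Z => hadj V *m Z *m W) E) => /=.
  rewrite !mulmxA V1 mul1mx -[_ *m hadj W *m W]mulmxA W1 mulmx1 => ->.
  by rewrite ?mulmxA.
have ET' := @comm_diag d _ x y f ET.
transitivity (V *m (hadj V *m W *m dg d (fun i => f (x i))) *m hadj W).
  by rewrite !mulmxA V2 mul1mx.
rewrite ET' -!mulmxA; congr (_ *m (_ *m _)).
by rewrite W2 mulmx1.
Qed.

Lemma mlog_spec d P U (x : nat -> R) : unitary d U ->
  (forall i, (i < d)%coq_nat -> Rlt 0 (x i)) -> meq d P (conjm d U (diagm x)) ->
  tomx d (mlog d P) = tomx d U *m dg d (fun i => log2 (x i)) *m hadj (tomx d U).
Proof.
move=> hU hx hP.
have ex : exists L, is_log d P L.
  by exists (conjm d U (diagm (fun i => log2 (x i)))); exists U, x.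
have := epsilon_spec (inhabits idm) (is_log d P) ex.
rewrite -/(mlog d P) => -[U' [lam' [hU' [hl' [hP' hL']]]]].
move/meq_tomx: hL' => ->; rewrite tomx_conjm tomx_diagm.
apply: spec_uniq; try by apply/unitary_tomx.
move/meq_tomx: hP'; move/meq_tomx: hP; rewrite !tomx_conjm !tomx_diagm => <- ->.
by [].
Qed.

Lemma tr_spec d (Z W : 'M[K]_d) (y : nat -> R) :
  complex.Re (\tr (Z *m (W *m dg d y *m hadj W))) =
  \sum_(i < d) complex.Re ((hadj W *m Z *m W) i i) * y i.
Proof.
rewrite !mulmxA mxtrace_mulC !mulmxA /dg mul_mx_diag /mxtrace Re_sum.
by apply: eq_bigr => i _; rewrite !mxE ReM_r.
Qed.

Unset Implicit Arguments.
Local Close Scope ring_scope.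
Lemma tangent_ln (x y : R) : Rlt 0 x -> Rlt 0 y ->
  Rle (Rplus (Rmult x (ln x)) (Rmult (Rplus (ln x) 1) (Rminus y x))) (Rmult y (ln y)).
Proof.
intros hx hy.
have h := exp_ineq1_le (ln (x / y)).
rewrite exp_ln in h; last by apply: Rdiv_lt_0_compat.
rewrite /Rdiv ln_mult in h; [|Lra.lra|by apply: Rinv_0_lt_compat].
rewrite ln_Rinv in h; last by [].
have h2 : Rle (Rmult y (1 + (ln x + - ln y))) (Rmult y (x * / y)).
  by apply: Rmult_le_compat_l; Lra.lra.
have e : Rmult y (x * / y) = x.
  by rewrite (Rmult_comm x) -Rmult_assoc Rinv_r ?Rmult_1_l //; Lra.lra.
rewrite e in h2.
Lra.lra.
Qed.

Local Open Scope ring_scope.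

Lemma tangent_ln' (x y : R) : 0 < x -> 0 < y ->
  x * ln x + (ln x + 1) * (y - x) <= y * ln y.
Proof. by move=> /RltP hx /RltP hy; apply/RleP; apply: tangent_ln. Qed.

Lemma jensen_ds n (D : nat -> nat -> R) (a : nat -> R) :
  (forall i j, (i < n)%N -> (j < n)%N -> 0 <= D i j) ->
  (forall i, (i < n)%N -> \sum_(j < n) D i j = 1) ->
  (forall j, (j < n)%N -> \sum_(i < n) D i j = 1) ->
  (forall j, (j < n)%N -> 0 < a j) ->
  (forall i, (i < n)%N -> 0 < \sum_(j < n) D i j * a j) ->
  \sum_(i < n) (\sum_(j < n) D i j * a j) * ln (\sum_(j < n) D i j * a j)
  <= \sum_(j < n) a j * ln (a j).
Proof.
move=> D0 Dr Dc apos xpos.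
set x := fun i => \sum_(j < n) D i j * a j.
have -> : \sum_(j < n) a j * ln (a j) = \sum_(i < n) \sum_(j < n) D i j * (a j * ln (a j)).
  rewrite exchange_big /=; apply: eq_bigr => j _.
  by rewrite -mulr_suml Dc // mul1r.
apply: ler_sum => i _.
have M : \sum_(j < n) D i j * (x i * ln (x i) + (ln (x i) + 1) * (a j - x i)) = x i * ln (x i).
  rewrite (eq_bigr (fun j : 'I_n => D i j * (x i * ln (x i)) + (ln (x i) + 1) * (D i j * a j) - (ln (x i) + 1) * x i * D i j)); last by move=> j _; ring.
  rewrite sumrB big_split /= -mulr_suml -!mulr_sumr Dr // -/(x i); ring.
rewrite -M; apply: ler_sum => j _; apply: ler_wpM2l; first exact: D0.
exact: tangent_ln' (xpos _ (ltn_ord i)) (apos _ (ltn_ord j)).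
Qed.

Lemma count_ge n m : \sum_(j < n) ((m <= j)%N)%:R = ((n - m)%N)%:R :> R.
Proof.
elim: n => [|n IH]; first by rewrite big_ord0 sub0n.
rewrite big_ord_recr /= IH.
case: (leqP m n) => h.
  by rewrite subSn // -natrD addn1.
have -> : (n.+1 - m = 0)%N by lia.
have -> : (n - m = 0)%N by lia.
by rewrite addr0.
Qed.

Lemma L_thresh n (u a : nat -> R) m th :
  (forall j, (j < n)%N -> 0 <= u j) ->
  (forall j, (j < n)%N -> u j <= 1) ->
  (forall j, (j < m)%N -> (j < n)%N -> th <= a j) ->
  (forall j, (m <= j)%N -> (j < n)%N -> a j <= th) ->
  \sum_(j < n) u j = \sum_(j < n) ((m <= j)%N)%:R ->
  \sum_(j < n) ((m <= j)%N)%:R * a j <= \sum_(j < n) u j * a j.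
Proof.
move=> u0 u1 hlo hhi hsum.
have H0 : 0 <= \sum_(j < n) (u j - ((m <= j)%N)%:R) * (a j - th).
  apply: sumr_ge0 => j _.
  case: (leqP m j) => h.
    apply: mulr_le0; first by rewrite subr_le0 u1.
    by rewrite subr_le0 hhi.
  by apply: mulr_ge0; rewrite subr_ge0 ?u0 ?hlo.
have E : \sum_(j < n) (u j - ((m <= j)%N)%:R) * (a j - th) =
  \sum_(j < n) u j * a j - \sum_(j < n) ((m <= j)%N)%:R * a j.
  rewrite (eq_bigr (fun j : 'I_n => (u j * a j - ((m <= j)%N)%:R * a j) - th * (u j - ((m <= j)%N)%:R))); last by move=> j _; ring.
  by rewrite sumrB sumrB -mulr_sumr sumrB hsum subrr mulr0 subr0.
by move: H0; rewrite E subr_ge0.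
Qed.

Lemma rev_sum n t (f : nat -> R) : (t <= n)%N ->
  \sum_(k < t) f (n - 1 - k)%N = \sum_(j < n) ((n - t <= j)%N)%:R * f j.
Proof.
elim: t => [|t IH] ht.
  rewrite big_ord0 big1 // => j _.
  by rewrite subn0 leqNgt ltn_ord mul0r.
rewrite big_ord_recr /= IH; last by lia.
have hp : (n - t.+1 < n)%N by lia.
have -> : \sum_(j < n) ((n - t.+1 <= j)%N)%:R * f j =
  \sum_(j < n) ((n - t <= j)%N)%:R * f j + \sum_(j < n) ((nat_of_ord j == n - t.+1)%N)%:R * f j.
  rewrite -big_split /=; apply: eq_bigr => j _.
  rewrite -mulrDl -natrD; congr (_%:R * _).
  case: (eqVneq (nat_of_ord j) (n - t.+1)%N) => [->|hne].
    have -> : (n - t <= n - t.+1)%N = false by apply/negbTE; rewrite -ltnNge; lia.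
    by rewrite leqnn.
  suff -> : (n - t.+1 <= j)%N = (n - t <= j)%N by rewrite addn0.
  apply/idP/idP => H; [|lia].
  have : (n - t.+1 < j)%N by rewrite ltn_neqAle eq_sym hne H.
  lia.
congr (_ + _).
rewrite (bigD1 (Ordinal hp)) //= eqxx mul1r big1 ?addr0.
  by congr f; lia.
move=> j hj; have -> : (nat_of_ord j == n - t.+1)%N = false.
  apply/negbTE; apply: contra hj => /eqP e; apply/eqP/val_inj => /=; exact: e.
by rewrite mul0r.
Qed.

Lemma abel_id (c e S : nat -> R) :
  S 0%N = 0 -> (forall t, S t.+1 = S t + e t) ->
  forall t, \sum_(k < t) c k * e k = c t * S t + \sum_(k < t) (c k - c k.+1) * S k.+1.
Proof.
move=> S0 SS; elim=> [|t IH]; first by rewrite !big_ord0 S0 mulr0 addr0.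
rewrite !big_ord_recr /= IH SS; ring.
Qed.

Lemma abel n (c e : nat -> R) :
  (forall k, (k.+1 < n)%N -> c k.+1 <= c k) ->
  (forall t, (t <= n)%N -> 0 <= \sum_(k < t) e k) ->
  \sum_(k < n) e k = 0 ->
  0 <= \sum_(k < n) c k * e k.
Proof.
move=> cdec hpart htot.
rewrite (@abel_id c e (fun t => \sum_(k < t) e k)); last first.
- by move=> t; rewrite big_ord_recr.
- by rewrite big_ord0.
rewrite htot mulr0 add0r.
apply: sumr_ge0 => k _.
case: (ltnP k.+1 n) => hk.
  apply: mulr_ge0; first by rewrite subr_ge0 cdec.
  by apply: hpart; apply: ltnW.
have -> : k.+1 = n by have := ltn_ord k; lia.
by rewrite htot mulr0.
Qed.

Lemma sum_cond_le n t (F : nat -> R) : (t <= n)%N -> (forall k, (k < n)%N -> 0 <= F k) ->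
  \sum_(k < t) F k <= \sum_(k < n) F k.
Proof.
move=> htn F0.
rewrite (big_ord_widen _ _ htn) big_mkcond /=.
apply: ler_sum => k _; case: ifP => _ //; exact: F0.
Qed.

Lemma rearr n (E : nat -> nat -> R) (a c : nat -> R) :
  (forall k j, (k < n)%N -> (j < n)%N -> 0 <= E k j) ->
  (forall k, (k < n)%N -> \sum_(j < n) E k j = 1) ->
  (forall j, (j < n)%N -> \sum_(k < n) E k j = 1) ->
  (forall i j, (i <= j)%N -> (j < n)%N -> a j <= a i) ->
  (forall i j, (i <= j)%N -> (j < n)%N -> c j <= c i) ->
  \sum_(j < n) a j * c (n - 1 - j)%N <= \sum_(k < n) (\sum_(j < n) E k j * a j) * c k.
Proof.
move=> E0 Er Ec adec cdec.
have -> : \sum_(j < n) a j * c (n - 1 - j)%N = \sum_(k < n) a (n - 1 - k)%N * c k.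
  rewrite (reindex_inj rev_ord_inj) /=; apply: eq_bigr => k _.
  have hk := ltn_ord k.
  have -> : (n - k.+1 = n - 1 - k)%N by lia.
  by have -> : (n - 1 - (n - 1 - k) = k)%N by lia.
set y := fun k => \sum_(j < n) E k j * a j.
have ps : forall t, \sum_(k < t) y k = \sum_(j < n) (\sum_(k < t) E k j) * a j.
  move=> t; rewrite /y exchange_big /=; apply: eq_bigr => j _; by rewrite mulr_suml.
have part : forall t, (t <= n)%N -> \sum_(k < t) a (n - 1 - k)%N <= \sum_(k < t) y k.
  move=> t ht; rewrite rev_sum // ps.
  apply: (@L_thresh n (fun j => \sum_(k < t) E k j) a (n - t)%N (a (minn (n - t) n.-1))).
  - move=> j hj; apply: sumr_ge0 => k _; apply: E0 => //.
    exact: leq_trans (ltn_ord k) ht.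
  - move=> j hj; rewrite -(Ec j hj); apply: (@sum_cond_le n t (fun k => E k j)) => // k hk; exact: E0.
  - move=> j hj hjn; apply: adec; [|lia]. lia.
  - move=> j hj hjn; apply: adec => //; lia.
  - rewrite count_ge exchange_big /=.
    rewrite (eq_bigr (fun _ => 1)); last by move=> k _; apply: Er; exact: leq_trans (ltn_ord k) ht.
    by rewrite sumr_const card_ord; congr (_%:R); lia.
have tot : \sum_(k < n) (y k - a (n - 1 - k)%N) = 0.
  rewrite sumrB ps rev_sum // subnn.
  rewrite (eq_bigr (fun j : 'I_n => a j)); last by move=> j _; rewrite Ec // mul1r.
  rewrite [X in _ - X](eq_bigr (fun j : 'I_n => a j)); last by move=> j _; rewrite leq0n mul1r.
  by rewrite subrr.
rewrite -subr_ge0 -sumrB.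
rewrite (eq_bigr (fun k : 'I_n => c k * (y k - a (n - 1 - k)%N))); last first.
  by move=> k _; rewrite /y; ring.
apply: (@abel n c (fun k => y k - a (n - 1 - k)%N)) => //.
- by move=> k hk; apply: cdec.
- by move=> t ht; rewrite sumrB subr_ge0; apply: part.
Qed.

Unset Implicit Arguments.
Local Close Scope ring_scope.
Definition ln2 : R := ln 2.
Local Open Scope ring_scope.
Local Notation "x %:C" := (@Complex R x 0) (format "x %:C") : ring_scope.

Lemma conjR (r : R) : conjC (@Complex R r 0) = @Complex R r 0.
Proof. change (Complex r (- 0) = Complex r 0). by rewrite oppr0. Qed.

Lemma hadj_dg d (x : nat -> R) : hadj (dg d x) = dg d x.
Proof.
apply/matrixP=> i j; rewrite !mxE; case: (eqVneq i j) => [->|ne].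
  by rewrite !mulr1n conjR.
by rewrite !mulr0n conjC0.
Qed.

Lemma diag_col d (W Y : 'M[K]_d) (i : 'I_d) :
  (hadj W *m Y *m W) i i = (hadj (col i W) *m Y *m col i W) 0 0.
Proof.
rewrite !mxE; apply: eq_bigr => l _; rewrite !mxE; congr (_ * _).
by apply: eq_bigr => m _; rewrite !mxE.
Qed.

Lemma psd_diag d (W Y : 'M[K]_d) (i : 'I_d) : psdm Y ->
  0 <= complex.Re ((hadj W *m Y *m W) i i).
Proof. by move=> [_ h]; rewrite diag_col; apply: h. Qed.

Lemma ReMl (r : R) (z : K) : complex.Re (r%:C * z) = r * complex.Re z.
Proof. by case: z => x y /=; rewrite mul0r subr0. Qed.

Lemma spec_sum d (W : 'M[K]_d) (x : nat -> R) :
  W *m dg d x *m hadj W = \sum_(j < d) (x j)%:C *: (col j W *m hadj (col j W)).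
Proof.
apply/matrixP=> i k; rewrite /dg mul_mx_diag summxE !mxE.
apply: eq_bigr => j _; rewrite !mxE big_ord1 !mxE; ring.
Qed.

Definition Pc {d} (W : 'M[K]_d) (j : 'I_d) := col j W *m hadj (col j W).

Lemma Pc_psd d (W : 'M[K]_d) j : psdm (Pc W j).
Proof.
split; first by rewrite /Pc hadjM hadjK.
move=> w; rewrite /Pc.
set z := (hadj w *m col j W).
have -> : hadj w *m (col j W *m hadj (col j W)) *m w = z *m hadj z.
  by rewrite /z hadjM hadjK !mulmxA.
have := mulcJ_ge0 (z 0 0); rewrite lecE => /andP[_ h].
rewrite mxE big_ord1.
have -> : hadj z 0 0 = (z 0 0)^* by rewrite !mxE.
exact: h.
Qed.

Lemma Pc_tr d (W : 'M[K]_d) j : unitm W -> \tr (Pc W j) = 1.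
Proof.
move=> [W1 _]; rewrite /Pc mxtrace_mulC.
rewrite /mxtrace big_ord1.
transitivity ((hadj W *m W) j j); last by rewrite W1 mxE eqxx.
by rewrite !mxE; apply: eq_bigr => l _; rewrite !mxE.
Qed.

Lemma dg1 d : dg d (fun _ => 1%R) = 1%:M.
Proof. by apply/matrixP=> i j; rewrite !mxE. Qed.

Lemma diag_dg d (x : nat -> R) (i : 'I_d) : complex.Re (dg d x i i) = x i.
Proof. by rewrite !mxE eqxx mulr1n. Qed.

Section Core.
Variable d : nat.
Variable Psi : 'M[K]_d -> 'M[K]_d.
Hypothesis PsiD : forall M N, Psi (M + N) = Psi M + Psi N.
Hypothesis PsiZ : forall c M, Psi (c *: M) = c *: Psi M.
Hypothesis Psi1 : Psi 1%:M = 1%:M.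
Hypothesis Psitr : forall M, \tr (Psi M) = \tr M.
Hypothesis Psipsd : forall M, psdm M -> psdm (Psi M).
Variables Vr Vs : 'M[K]_d.
Hypothesis Vru : unitm Vr.
Hypothesis Vsu : unitm Vs.
Variables a b : nat -> R.
Hypothesis apos : forall j, (j < d)%N -> 0 < a j.
Hypothesis bpos : forall j, (j < d)%N -> 0 < b j.
Hypothesis adec : forall i j, (i <= j)%N -> (j < d)%N -> a j <= a i.
Hypothesis bdec : forall i j, (i <= j)%N -> (j < d)%N -> b j <= b i.

Lemma Psi0 : Psi 0 = 0.
Proof. by have := PsiZ 0 0; rewrite !scale0r. Qed.

Lemma Psi_sum (F : 'I_d -> 'M[K]_d) : Psi (\sum_(j < d) F j) = \sum_(j < d) Psi (F j).
Proof.
apply: (big_ind2 (fun M N => Psi M = N)) => //; first exact: Psi0.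
by move=> ? ? ? ? <- <-; rewrite PsiD.
Qed.

Definition DD (W : 'M[K]_d) (j i : 'I_d) := complex.Re ((hadj W *m Psi (Pc Vr j) *m W) i i).

Lemma DD_ge0 W j i : 0 <= DD W j i.
Proof. by apply: psd_diag; apply: Psipsd; apply: Pc_psd. Qed.

Lemma sum_Pc : \sum_(j < d) Pc Vr j = 1%:M.
Proof.
have := spec_sum _ Vr (fun _ => 1%R); rewrite dg1 mulmx1 (proj2 Vru) => ->.
by apply: eq_bigr => j _; rewrite scale1r.
Qed.

Lemma DD_row W (i : 'I_d) : unitm W -> \sum_(j < d) DD W j i = 1.
Proof.
move=> [W1 _]; rewrite /DD -Re_sum.
rewrite (eq_bigr (fun j => (hadj W *m Psi (Pc Vr j) *m W) i i)) //.
rewrite -summxE -mulmx_suml -mulmx_sumr -Psi_sum sum_Pc Psi1 mulmx1 W1.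
by rewrite mxE eqxx.
Qed.

Lemma DD_col W (j : 'I_d) : unitm W -> \sum_(i < d) DD W j i = 1.
Proof.
move=> [_ W2]; rewrite /DD -Re_sum -/(mxtrace _) mxtrace_mulC mulmxA W2 mul1mx.
by rewrite Psitr Pc_tr.
Qed.

Lemma rho_sum : Vr *m dg d a *m hadj Vr = \sum_(j < d) (a j)%:C *: Pc Vr j.
Proof. exact: spec_sum. Qed.

Definition Y := Psi (Vr *m dg d a *m hadj Vr).

Lemma Y_diag W (i : 'I_d) :
  complex.Re ((hadj W *m Y *m W) i i) = \sum_(j < d) DD W j i * a j.
Proof.
rewrite /Y rho_sum Psi_sum.
rewrite (eq_bigr (fun j : 'I_d => (a j)%:C *: Psi (Pc Vr j))); last by move=> j _; rewrite PsiZ.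
rewrite mulmx_sumr mulmx_suml summxE Re_sum; apply: eq_bigr => j _.
rewrite -scalemxAr -scalemxAl mxE ReMl /DD; ring.
Qed.

Lemma a_psd : psdm (Vr *m dg d a *m hadj Vr).
Proof.
split.
  by rewrite !hadjM hadjK mulmxA hadj_dg.
move=> w; rewrite rho_sum mulmx_sumr mulmx_suml summxE Re_sum.
apply: sumr_ge0 => j _; rewrite -scalemxAr -scalemxAl mxE ReMl.
apply: mulr_ge0; first by apply: ltW; apply: apos.
by case: (Pc_psd _ Vr j) => _ /(_ w).
Qed.

Lemma Y_psd : psdm Y.
Proof. exact: Psipsd a_psd. Qed.

Definition lg (x : R) : R := log2 x.
Lemma lgE x : lg x = ln x * ln2^-1. Proof. by []. Qed.
Lemma ln2_pos : 0 < ln2.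
Proof. apply/RltP; apply: (Rlt_trans _ (/2)); [apply: Rinv_0_lt_compat; exact: Rlt_0_2 | exact: ln_lt_2]. Qed.

Lemma lg_le x y : 0 < x -> x <= y -> lg x <= lg y.
Proof.
move=> hx hxy; rewrite !lgE.
have l2 := ln2_pos.
rewrite ler_pM2r ?invr_gt0 //.
case: (eqVneq x y) => [->//|ne].
apply/ltW/RltP; apply: ln_increasing; apply/RltP => //.
by rewrite lt_neqAle ne hxy.
Qed.

Lemma sum_lg (n : nat) (F G : nat -> R) :
  \sum_(i < n) F i * lg (G i) = (\sum_(i < n) F i * ln (G i)) / ln2.
Proof. by rewrite mulr_suml; apply: eq_bigr => i _; rewrite lgE mulrA. Qed.

Theorem core_bound :
  exists W (x : nat -> R), unitm W /\ Y = W *m dg d x *m hadj W /\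
   (forall i, (i < d)%N -> 0 < x i) /\
   complex.Re (\tr (Y *m (W *m dg d (fun i => lg (x i)) *m hadj W)))
   - complex.Re (\tr (Y *m (Vs *m dg d (fun i => lg (b i)) *m hadj Vs)))
   <= \sum_(j < d) a j * lg (a j) - \sum_(j < d) a j * lg (b (d - 1 - j)%N).
Proof.
have [W [x [Wu EY]]] := herm_spec _ _ (proj1 Y_psd).
have xE : forall i : 'I_d, x i = \sum_(j < d) DD W j i * a j.
  move=> i; rewrite -Y_diag EY.
  rewrite -!mulmxA !mulmxA (proj1 Wu) mul1mx -mulmxA (proj1 Wu) mulmx1.
  by rewrite diag_dg.
have xpos : forall i, (i < d)%N -> 0 < x i.
  move=> i hi; rewrite (xE (Ordinal hi)).
  have hd : (d.-1 < d)%N by lia.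
  apply: (@lt_le_trans _ _ (\sum_(j < d) DD W j (Ordinal hi) * a d.-1)).
    by rewrite -mulr_suml DD_row // mul1r apos.
  apply: ler_sum => j _; apply: ler_wpM2l; first exact: DD_ge0.
  by apply: adec => //; have := ltn_ord j; lia.
exists W, x; split => //; split => //; split => //.
rewrite !tr_spec.
have -> : \sum_(i < d) complex.Re ((hadj W *m Y *m W) i i) * lg (x i)
  = \sum_(i < d) x i * lg (x i).
  apply: eq_bigr => i _; congr (_ * _).
  rewrite EY -!mulmxA !mulmxA (proj1 Wu) mul1mx -mulmxA (proj1 Wu) mulmx1.
  by rewrite diag_dg.
rewrite [X in _ - X <= _](eq_bigr (fun k : 'I_d => (\sum_(j < d) DD Vs j k * a j) * lg (b k))); last first.
  by move=> k _; rewrite Y_diag.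
set Dn := fun (V : 'M[K]_d) (i j : nat) =>
  match (insub i : option 'I_d), (insub j : option 'I_d) with
  | Some i', Some j' => DD V j' i' | _, _ => 0 end.
have DnE : forall V (i j : 'I_d), Dn V i j = DD V j i by move=> V i j; rewrite /Dn !valK.
have J : \sum_(i < d) x i * lg (x i) <= \sum_(j < d) a j * lg (a j).
  rewrite !sum_lg ler_pM2r; last by rewrite invr_gt0; exact: ln2_pos.
  have e1 : forall i : 'I_d, \sum_(j < d) Dn W i j * a j = x i.
    by move=> i; rewrite xE; apply: eq_bigr => j _; rewrite DnE.
  have e : \sum_(i < d) (\sum_(j < d) Dn W i j * a j) * ln (\sum_(j < d) Dn W i j * a j)
    = \sum_(i < d) x i * ln (x i) by apply: eq_bigr => i _; rewrite e1.
  rewrite -e; apply: jensen_ds.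
  - move=> i j hi hj; rewrite (DnE W (Ordinal hi) (Ordinal hj)); exact: DD_ge0.
  - move=> i hi; rewrite -(DD_row W (Ordinal hi) Wu); apply: eq_bigr => j _; by rewrite (DnE W (Ordinal hi)).
  - move=> j hj; rewrite -(DD_col W (Ordinal hj) Wu); apply: eq_bigr => i _; by rewrite (DnE W _ (Ordinal hj)).
  - exact: apos.
  - by move=> i hi; rewrite (e1 (Ordinal hi)); apply: xpos.
have Rr : \sum_(j < d) a j * lg (b (d - 1 - j)%N)
          <= \sum_(k < d) (\sum_(j < d) DD Vs j k * a j) * lg (b k).
  have e : \sum_(k < d) (\sum_(j < d) Dn Vs k j * a j) * lg (b k)
    = \sum_(k < d) (\sum_(j < d) DD Vs j k * a j) * lg (b k).
    by apply: eq_bigr => k _; congr (_ * _); apply: eq_bigr => j _; rewrite DnE.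
  rewrite -e; apply: (@rearr d (Dn Vs) a (fun k => lg (b k))).
  - move=> i j hi hj; rewrite (DnE Vs (Ordinal hi) (Ordinal hj)); exact: DD_ge0.
  - move=> i hi; rewrite -(DD_row Vs (Ordinal hi) Vsu); apply: eq_bigr => j _; by rewrite (DnE Vs (Ordinal hi)).
  - move=> j hj; rewrite -(DD_col Vs (Ordinal hj) Vsu); apply: eq_bigr => i _; by rewrite (DnE Vs _ (Ordinal hj)).
  - exact: adec.
  - move=> i j hij hj; apply: lg_le; [apply: bpos|apply: bdec] => //.
lra.
Qed.

End Core.

Set Implicit Arguments. Unset Strict Implicit.
Local Open Scope ring_scope.
Local Notation "x %:C" := (@Complex R x 0) (format "x %:C") : ring_scope.

Lemma unitm_col_neq0 d (V : 'M[K]_d) (i : 'I_d) : unitm V -> col i V != 0.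
Proof.
move=> [V1 _]; apply/negP => /eqP h.
have : (hadj V *m V) i i = 1 by rewrite V1 mxE eqxx.
have -> : (hadj V *m V) i i = (hadj (col i V) *m col i V) 0 0.
  by rewrite !mxE; apply: eq_bigr => l _; rewrite !mxE.
by rewrite h mulmx0 mxE => /eqP; rewrite eq_sym oner_eq0.
Qed.

Lemma eig_data d A a : posdef d A -> eigs_decreasing d A a ->
  exists U, unitary d U /\ tomx d A = tomx d U *m dg d a *m hadj (tomx d U) /\
    meq d A (conjm d U (diagm a)) /\
    (forall i, (i < d)%N -> 0 < a i) /\
    (forall i j, (i <= j)%N -> (j < d)%N -> a j <= a i).
Proof.
move=> hA [[U [hU hAU]] hdec].
have hAU' := hAU; move/meq_tomx: hAU'; rewrite tomx_conjm tomx_diagm => EA.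
exists U; split => //; split => //; split => //; split.
  move=> i hi.
  have Vu := proj1 (unitary_tomx d U) hU.
  have := @posdef_pos d A (col (Ordinal hi) (tomx d U)) hA (unitm_col_neq0 _ Vu).
  rewrite -diag_col EA.
  rewrite -!mulmxA !mulmxA (proj1 Vu) mul1mx -mulmxA (proj1 Vu) mulmx1.
  by rewrite diag_dg.
move=> i j hij hj; apply/RleP; apply: hdec; [exact/ssrnat.leP | exact/ssrnat.ltP].
Qed.

Lemma Cre_tr d A B : Cre (mtr d (mmul d A B)) = complex.Re (\tr (tomx d A *m tomx d B)).
Proof. by rewrite Cre_c2z mtrE tomx_mmul. Qed.

Lemma mlog_tomx d A (U : Mat) (x : nat -> R) : unitary d U ->
  (forall i, (i < d)%N -> 0 < x i) -> tomx d A = tomx d U *m dg d x *m hadj (tomx d U) ->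
  tomx d (mlog d A) = tomx d U *m dg d (fun i => lg (x i)) *m hadj (tomx d U).
Proof.
move=> hU hx EA; apply: mlog_spec => //.
  by move=> i hi; apply/RltP; apply: hx; apply/ssrnat.ltP.
by apply/meq_tomx; rewrite tomx_conjm tomx_diagm.
Qed.

Lemma ent_spec d A (U : Mat) (x : nat -> R) : unitary d U ->
  (forall i, (i < d)%N -> 0 < x i) -> tomx d A = tomx d U *m dg d x *m hadj (tomx d U) ->
  Cre (mtr d (mmul d A (mlog d A))) = \sum_(i < d) x i * lg (x i).
Proof.
move=> hU hx EA; rewrite Cre_tr (mlog_tomx hU hx EA) tr_spec.
have Vu := proj1 (unitary_tomx d U) hU.
apply: eq_bigr => i _; congr (_ * _); rewrite EA.
rewrite -!mulmxA !mulmxA (proj1 Vu) mul1mx -mulmxA (proj1 Vu) mulmx1.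
by rewrite diag_dg.
Qed.

Section PhiBound.
Variables (d : nat) (Phi : Mat -> Mat).
Hypothesis hPhi : bistochastic d Phi.

Definition PsiP (M : 'M[K]_d) : 'M[K]_d := tomx d (Phi (frommx d M)).

Lemma PsiP_tomx A : tomx d (Phi A) = PsiP (tomx d A).
Proof.
case: hPhi => wd _; apply/meq_tomx; apply: wd.
by apply/meq_tomx; rewrite frommxK.
Qed.

Lemma PsiP_D M N : PsiP (M + N) = PsiP M + PsiP N.
Proof.
case: hPhi => wd [[lD _] _].
rewrite /PsiP -tomx_madd; apply/meq_tomx.
have h : meq d (frommx d (M + N)) (madd (frommx d M) (frommx d N)).
  by apply/meq_tomx; rewrite tomx_madd !frommxK.
move=> i j hi hj; rewrite (wd _ _ h i j hi hj); exact: lD.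
Qed.

Lemma PsiP_Z c M : PsiP (c *: M) = c *: PsiP M.
Proof.
case: hPhi => wd [[_ lZ] _].
rewrite /PsiP -(z2cK c) -tomx_mscale; apply/meq_tomx.
have h : meq d (frommx d (c2z (z2c c) *: M)) (mscale (z2c c) (frommx d M)).
  by apply/meq_tomx; rewrite tomx_mscale !frommxK.
move=> i j hi hj; rewrite (wd _ _ h i j hi hj); exact: lZ.
Qed.

Lemma PsiP_1 : PsiP 1%:M = 1%:M.
Proof.
case: hPhi => _ [_ [_ [_ hu]]].
by rewrite -(tomx_idm d) -PsiP_tomx; apply/meq_tomx.
Qed.

Lemma PsiP_tr M : \tr (PsiP M) = \tr M.
Proof.
case: hPhi => _ [_ [_ [htp _]]].
by rewrite /PsiP -mtrE htp mtrE frommxK.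
Qed.

Lemma psd_meq n A B : psd n A -> meq n A B -> psd n B.
Proof. by move=> /psd_tomx h /meq_tomx e; apply/psd_tomx; rewrite -e. Qed.

Lemma Phi_psd A : psd d A -> psd d (Phi A).
Proof.
case: hPhi => wd [_ [hcp _]].
move=> hA; have := hcp 1%N A; rewrite Nat.mul_1_l => /(_ hA) h.
apply: (psd_meq h) => p q hp hq.
by rewrite /ampl Nat.div_small // Nat.div_small // Nat.mod_small // Nat.mod_small.
Qed.

Lemma PsiP_psd M : psdm M -> psdm (PsiP M).
Proof.
move=> hM; apply/psd_tomx; apply: Phi_psd; apply/psd_tomx; by rewrite frommxK.
Qed.

End PhiBound.

Definition Rrhs d (rho : Mat) (a b : nat -> R) : R :=
  Rminus (Cre (mtr d (mmul d rho (mlog d rho))))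
         (rsum d (fun j => Rmult (a j) (log2 (b (d - 1 - j)%nat)))).

Lemma phi_bound d rho sigma a b Phi :
  posdef d rho -> posdef d sigma -> eigs_decreasing d rho a -> eigs_decreasing d sigma b ->
  bistochastic d Phi -> relent d (Phi rho) sigma <= Rrhs d rho a b.
Proof.
move=> hr hs er es hPhi.
have [Ur [hUr [Erho [_ [apos adec]]]]] := eig_data hr er.
have [Us [hUs [Esig [_ [bpos bdec]]]]] := eig_data hs es.
have Vru := proj1 (unitary_tomx d Ur) hUr.
have Vsu := proj1 (unitary_tomx d Us) hUs.
have [W [x [Wu [EY [xpos H]]]]] := @core_bound d (PsiP Phi) (PsiP_D hPhi) (PsiP_Z hPhi) (PsiP_1 hPhi)
  (PsiP_tr hPhi) (PsiP_psd hPhi) _ _ Vru Vsu _ _ apos bpos adec bdec.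
have EX : tomx d (Phi rho) = W *m dg d x *m hadj W.
  by rewrite -EY PsiP_tomx // Erho.
have hW : unitary d (frommx d W) by apply/unitary_tomx; rewrite frommxK.
have EX' : tomx d (Phi rho) = tomx d (frommx d W) *m dg d x *m hadj (tomx d (frommx d W)).
  by rewrite frommxK.
rewrite /relent /Rrhs.
rewrite (ent_spec hW xpos EX').
rewrite (ent_spec hUr apos Erho).
rewrite Cre_tr (mlog_tomx hUs bpos Esig) rsumE.
have T1 : complex.Re (\tr (Y d (PsiP Phi) (tomx d Ur) a *m (W *m dg d (fun i => lg (x i)) *m hadj W)))
    = \sum_(i < d) x i * lg (x i).
  rewrite tr_spec; apply: eq_bigr => i _; congr (_ * _).
  rewrite EY -!mulmxA !mulmxA (proj1 Wu) mul1mx -mulmxA (proj1 Wu) mulmx1.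
  by rewrite diag_dg.
rewrite T1 /Y -Erho -PsiP_tomx // in H.
Qed.

Set Implicit Arguments. Unset Strict Implicit.
Local Open Scope ring_scope.

Lemma L_split (F : nat -> K) k d :
  \sum_(p < Nat.mul k d) F p = \sum_(a < k) \sum_(s < d) F (Nat.add (Nat.mul a d) s).
Proof.
elim: k => [|k IH]; first by rewrite !big_ord0.
have -> : Nat.mul k.+1 d = (Nat.mul k d + d)%N by rewrite /= addnC.
rewrite big_split_ord /= IH big_ord_recr /=.
by congr (_ + _).
Qed.

Lemma idx_div d a s : (s < d)%coq_nat -> Nat.div (Nat.add (Nat.mul a d) s) d = a.
Proof.
move=> h; rewrite Nat.div_add_l; last by lia.
by rewrite Nat.div_small // Nat.add_0_r.
Qed.

Lemma idx_mod d a s : (s < d)%coq_nat -> Nat.modulo (Nat.add (Nat.mul a d) s) d = s.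
Proof.
move=> h; rewrite Nat.add_comm Nat.Div0.mod_add Nat.mod_small //.
Qed.

Definition blk d (A : Mat) a b : Mat :=
  fun i j => A (Nat.add (Nat.mul a d) i) (Nat.add (Nat.mul b d) j).
Definition vblk d (v : nat -> Defs.C) a : nat -> Defs.C := fun i => v (Nat.add (Nat.mul a d) i).

Lemma bf_sum d B x y : c2z (bf d B x y) =
  \sum_(s < d) (c2z (x s))^* * \sum_(t < d) c2z (B s t) * c2z (y t).
Proof.
rewrite /bf csumE; apply: eq_bigr => s _; rewrite c2z_mul c2z_conj csumE.
by congr (_ * _); apply: eq_bigr => t _; rewrite c2z_mul.
Qed.

Lemma qform_blocks k d A v : c2z (qform (Nat.mul k d) A v) =
  \sum_(a < k) \sum_(b < k) c2z (bf d (blk d A a b) (vblk d v a) (vblk d v b)).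
Proof.
rewrite -/(bf (Nat.mul k d) A v v) bf_sum.
rewrite (L_split (fun p => (c2z (v p))^* * \sum_(t < Nat.mul k d) c2z (A p t) * c2z (v t))).
apply: eq_bigr => a _.
under eq_bigr => s _ do rewrite (L_split (fun t => c2z (A (Nat.add (Nat.mul a d) s) t) * c2z (v t))) big_distrr /=.
rewrite exchange_big /=; apply: eq_bigr => b _.
by rewrite bf_sum; apply: eq_bigr => s _; congr (_ * _).
Qed.

Lemma bf_meq d B B' x y : meq d B B' -> bf d B x y = bf d B' x y.
Proof. by move=> /meq_tomx e; apply: c2z_inj; rewrite !bfE e. Qed.

Lemma psd0 (A : Mat) : psd 0 A.
Proof.
split; first by move=> i j hi; lia.
by move=> v; rewrite /qform /=; apply: Rle_refl.
Qed.

Lemma conj_cp d U : unitary d U -> completely_positive d (conjm d U).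
Proof.
move=> hU k M [hM hq].
have Vu := proj1 (unitary_tomx d U) hU.
case: (posnP d) => [->|dpos].
  by rewrite Nat.mul_0_r; apply: psd0.
have d0 : d <> 0%N by move=> e; rewrite e in dpos.
have hd : forall p, (p < Nat.mul k d)%coq_nat -> (Nat.div p d < k)%coq_nat.
  move=> p hp; apply: Nat.Div0.div_lt_upper_bound; lia.
have hm : forall p, (Nat.modulo p d < d)%coq_nat by move=> p; apply: Nat.mod_upper_bound.
have hblk : forall a b, (a < k)%coq_nat -> (b < k)%coq_nat ->
    meq d (adj (blk d M a b)) (blk d M b a).
  move=> a b ha hb i j hi hj; rewrite /adj /blk.
  by rewrite -(hM (Nat.add (Nat.mul b d) i) (Nat.add (Nat.mul a d) j)); [|nia|nia].
split.
  move=> p q hp hq'.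
  have claim : meq d (adj (conjm d U (blk d M (Nat.div q d) (Nat.div p d))))
                     (conjm d U (blk d M (Nat.div p d) (Nat.div q d))).
    apply/meq_tomx; rewrite tomx_adj !tomx_conjm !hadjM hadjK !mulmxA.
    congr (_ *m _ *m _); rewrite -tomx_adj; apply/meq_tomx; apply: hblk; auto.
  exact: (claim _ _ (hm p) (hm q)).
move=> v.
set Ub := tomx d U.
pose w : nat -> Defs.C := fun p =>
  fromv d (hadj Ub *m vcol d (vblk d v (Nat.div p d))) (Nat.modulo p d).
have hw : forall a, vcol d (vblk d w a) = hadj Ub *m vcol d (vblk d v a).
  move=> a; rewrite -[RHS](fromvK d (hadj Ub *m vcol d (vblk d v a))).
  apply/matrixP=> i j; rewrite !mxE; congr c2z.
  rewrite {1}/vblk /w idx_div; last by apply/ssrnat.ltP.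
  by rewrite idx_mod //; apply/ssrnat.ltP.
have := hq w; rewrite !Cre_c2z qform_blocks qform_blocks.
suff -> : (\sum_(a < k) \sum_(b < k) c2z (bf d (blk d (ampl d (conjm d U) M) a b) (vblk d v a) (vblk d v b)))
  = \sum_(a < k) \sum_(b < k) c2z (bf d (blk d M a b) (vblk d w a) (vblk d w b)) by [].
apply: eq_bigr => a _; apply: eq_bigr => b _.
rewrite (@bf_meq d _ (conjm d U (blk d M a b))); last first.
  move=> i j hi hj; rewrite /blk /ampl !idx_div // !idx_mod //.
rewrite !bfE !hw tomx_conjm hadjM hadjK !mulmxA.
by [].
Qed.

Lemma conj_bistochastic d U : unitary d U -> bistochastic d (conjm d U).
Proof.
move=> hU; have Vu := proj1 (unitary_tomx d U) hU.
split.
  by move=> A B /meq_tomx e; apply/meq_tomx; rewrite !tomx_conjm e.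
split.
  split.
    by move=> A B; apply/meq_tomx; rewrite tomx_conjm !tomx_madd !tomx_conjm mulmxDr mulmxDl.
  by move=> c A; apply/meq_tomx; rewrite tomx_conjm !tomx_mscale tomx_conjm -scalemxAr -scalemxAl.
split; first exact: conj_cp.
split.
  move=> A; apply: c2z_inj; rewrite !mtrE tomx_conjm mxtrace_mulC mulmxA (proj1 Vu) mul1mx.
  by [].
by apply/meq_tomx; rewrite tomx_conjm tomx_idm mulmx1 (proj2 Vu).
Qed.

Set Implicit Arguments. Unset Strict Implicit.
Local Open Scope ring_scope.
Local Notation "x %:C" := (@Complex R x 0) (format "x %:C") : ring_scope.

Definition Qm d : 'M[K]_d := \matrix_(i < d, k < d) (if i == rev_ord k then 1 else 0).

Lemma rev_eq d (i k : 'I_d) : (k == rev_ord i) = (i == rev_ord k).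
Proof. by apply/eqP/eqP => ->; rewrite rev_ordK. Qed.

Lemma hadjQ d : hadj (Qm d) = Qm d.
Proof.
apply/matrixP=> i k; rewrite !mxE rev_eq.
by case: ifP => _; [exact: conjC1 | exact: conjC0].
Qed.

Lemma QQ d : Qm d *m Qm d = 1%:M.
Proof.
apply/matrixP=> i k; rewrite !mxE (bigD1 (rev_ord i)) //= !mxE rev_ordK eqxx mul1r.
rewrite (inj_eq rev_ord_inj) big1 ?addr0.
  by case: (i == k); rewrite ?mulr1n ?mulr0n.
by move=> l hl; rewrite !mxE -rev_eq (negbTE hl) mul0r.
Qed.

Lemma Q_diag d (a : nat -> R) (k : 'I_d) :
  (Qm d *m dg d a *m Qm d) k k = (a (rev_ord k))%:C.
Proof.
rewrite /dg mul_mx_diag mxE (bigD1 (rev_ord k)) //= !mxE rev_ordK !eqxx mulr1 mul1r.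
rewrite big1 ?addr0 // => l hl.
by rewrite !mxE -rev_eq (negbTE hl) !mul0r.
Qed.

Lemma unitmM d (A B : 'M[K]_d) : unitm A -> unitm B -> unitm (A *m B).
Proof.
move=> [A1 A2] [B1 B2]; split; rewrite hadjM.
  by rewrite mulmxA -(mulmxA (hadj B)) A1 mulmx1 B1.
by rewrite mulmxA -(mulmxA A) B2 mulmx1 A2.
Qed.

Lemma unitm_hadj d (A : 'M[K]_d) : unitm A -> unitm (hadj A).
Proof. by move=> [A1 A2]; split; rewrite hadjK. Qed.

Lemma exist_U d rho sigma a b :
  posdef d rho -> posdef d sigma -> eigs_decreasing d rho a -> eigs_decreasing d sigma b ->
  exists U, unitary d U /\ relent d (conjm d U rho) sigma = Rrhs d rho a b.
Proof.
move=> hr hs er es.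
have [Ur [hUr [Erho [_ [apos adec]]]]] := eig_data hr er.
have [Us [hUs [Esig [_ [bpos bdec]]]]] := eig_data hs es.
have Vru := proj1 (unitary_tomx d Ur) hUr.
have Vsu := proj1 (unitary_tomx d Us) hUs.
set Vr := tomx d Ur in Erho Vru *.
set Vs := tomx d Us in Esig Vsu *.
have Qu : unitm (Qm d) by split; rewrite hadjQ QQ.
set W := Vs *m Qm d.
have Wu : unitm W by apply: unitmM.
set U0m := W *m hadj Vr.
have U0u : unitm U0m by apply: unitmM => //; apply: unitm_hadj.
exists (frommx d U0m); split.
  by apply/unitary_tomx; rewrite frommxK.
have EY : tomx d (conjm d (frommx d U0m) rho) = W *m dg d a *m hadj W.
  rewrite tomx_conjm frommxK Erho /U0m hadjM hadjK !mulmxA.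
  rewrite -(mulmxA W) (proj1 Vru) mulmx1 -(mulmxA _ (hadj Vr)) (proj1 Vru) mulmx1.
  by [].
have hWf : unitary d (frommx d W) by apply/unitary_tomx; rewrite frommxK.
have EY' : tomx d (conjm d (frommx d U0m) rho)
         = tomx d (frommx d W) *m dg d a *m hadj (tomx d (frommx d W)).
  by rewrite frommxK.
rewrite /relent /Rrhs (ent_spec hWf apos EY') (ent_spec hUr apos Erho).
rewrite Cre_tr (mlog_tomx hUs bpos Esig) rsumE tr_spec -/Vs.
f_equal.
transitivity (\sum_(k < d) a (rev_ord k) * lg (b k)).
  apply: eq_bigr => k _; congr (_ * _).
  rewrite EY /W hadjM hadjQ !mulmxA (proj1 Vsu) mul1mx.
  rewrite -(mulmxA _ (hadj Vs)) (proj1 Vsu) mulmx1.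
  by rewrite Q_diag.
rewrite [RHS](reindex_inj rev_ord_inj) /=; apply: eq_bigr => k _.
have hk := ltn_ord k.
by have -> : (d - 1 - (d - k.+1) = k)%N by lia.
Qed.

Local Close Scope ring_scope.
Open Scope R_scope.

Theorem mainTheorem6 (d : nat) (rho sigma : Mat) (a b : nat -> R) :
  posdef d rho -> posdef d sigma ->
  eigs_decreasing d rho a -> eigs_decreasing d sigma b ->
  let rhs := Cre (mtr d (mmul d rho (mlog d rho)))
             - rsum d (fun j => a j * log2 (b (d - 1 - j)%nat)) in
  ((forall Phi, bistochastic d Phi -> relent d (Phi rho) sigma <= rhs) /\
   (exists Phi, bistochastic d Phi /\ relent d (Phi rho) sigma = rhs)) /\
  ((forall U, unitary d U -> relent d (conjm d U rho) sigma <= rhs) /\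
   (exists U, unitary d U /\ relent d (conjm d U rho) sigma = rhs)).
Proof.
move=> hr hs er es rhs.
have hb : forall Phi, bistochastic d Phi -> relent d (Phi rho) sigma <= rhs.
  by move=> Phi hPhi; apply/RleP; exact: phi_bound.
have [U0 [hU0 eU0]] := exist_U hr hs er es.
split; split.
- exact: hb.
- by exists (conjm d U0); split; [exact: conj_bistochastic | exact: eU0].
- by move=> U hU; apply: hb; exact: conj_bistochastic.
- by exists U0; split.
Qed.
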